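(* Let $M\cong\mathbb Z^d$, $\Sigma$, $v_1,\ldots,v_n$, $\mathcal A$, $D_0$, $\bar M$, $\mathbf v_0,\ldots,\mathbf v_n$, $K$ and $\Psi_{\mathbf p}$ be as in the context, with $\mathbb P_\Sigma$ nef-Fano. Then for every $\mathbf p\in K\cap\bar M$ and every $j\in\{0,1,\ldots,n\}$, $$D_j\Psi_{\mathbf p}=a_j\Psi_{\mathbf p+\mathbf v_j}$$ as formal Laurent series in $a_1,\ldots,a_n$ with coefficients in $\mathcal A$ (where $a_0=1$).
   Context: $M\cong\mathbb Z^d$ is a lattice with dual $N$; $\Sigma$ is a complete simplicial fan in $M_{\mathbb R}$ with minimal ray generators $v_1,\ldots,v_n$; $\mathbb P_\Sigma$ is assumed nef-Fano (anticanonical divisor nef); in particular every $v_i$ lies on the boundary of $\Delta=\mathrm{conv}(v_1,\ldots,v_n)$. For $k\ge0$, $A_k$ is the quotient of $\mathbb C[D_1,\ldots,D_n]$ by the linear elements $\sum_i(\lambda\cdot v_i)D_i$ ($\lambda\in N$) and the monomials $\prod_iD_i^{r_i}$ such that no cone of $\Sigma$ contains all $v_i$ with $r_i>k$. Multiplication by $\prod_iD_i^l$ defines $\mathbb C[D_1,\ldots,D_n]$-module maps $A_k\to A_{k+l}$, and $\mathcal A$ is the direct limit of the $A_k$ under these maps (a $\mathbb C[D_1,\ldots,D_n]$-module). Put $D_0=-\sum_{i=1}^nD_i$. Let $\bar M=M\oplus\mathbb Z$, $\mathbf v_i=v_i\oplus1$ for $1\le i\le n$, $\mathbf v_0=\mathbf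 0\oplus1$, and $K\subset\bar M_{\mathbb R}$ the cone spanned by $\mathbf v_0,\ldots,\mathbf v_n$. For $\beta=(b_0,\ldots,b_n)\in\mathbb Z^{n+1}$ with $b_0\le0$, the Morrison–Plesser class $\Phi_\beta\in\mathcal A$ is the image of $D_0^{-b_0}\prod_{i=1}^nD_i^{k-b_i}\in A_k$ for any $k\ge\max_i b_i$ (independent of $k$). For $\mathbf p\in K\cap\bar M$, $$\Psi_{\mathbf p}=\sum_{\beta:\ \sum_{i=0}^nb_i\mathbf v_i=-\mathbf p,\ b_0\le0}\Phi_\beta\prod_{i=1}^na_i^{b_i},$$ a formal Laurent series in the variables $a_1,\ldots,a_n$ with coefficients in $\mathcal A$; $D_j$ acts coefficientwise. *)

(* Defs.v *)
From HB Require Import structures.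
From mathcomp Require Import all_boot all_order all_algebra.
From mathcomp Require Import Rstruct.
From mathcomp Require Import complex.
From mathcomp Require Import mpoly.
Set Implicit Arguments.
Unset Strict Implicit.
Unset Printing Implicit Defensive.
Import Order.TTheory GRing.Theory Num.Theory.
Local Open Scope ring_scope.

Notation Real := Rdefinitions.R.
Definition Cplx : fieldType := complex Real.

(* A cone of the simplicial fan is encoded by the set S of indices of   *)
(* its ray generators; its support is cone{v_i : i in S} in M_R = R^d.  *)

Definition in_cone (d n : nat) (v : 'I_n -> 'I_d -> int) (S : {set 'I_n})
    (x : 'I_d -> Real) : Prop :=
  exists c : 'I_n -> Real, (forall i, 0 <= c i) /\
    forall k, x k = \sum_(i in S) c i * (v i k)%:~R.

Definition vR (d n : nat) (v : 'I_n -> 'I_d -> int) (i : 'I_n) : 'I_d -> Real :=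
  fun k => (v i k)%:~R.

Definition lin_indep (d n : nat) (v : 'I_n -> 'I_d -> int) (S : {set 'I_n}) : Prop :=
  forall c : 'I_n -> Real,
    (forall k, \sum_(i in S) c i * (v i k)%:~R = 0) -> forall i, i \in S -> c i = 0.

Definition primitive_vec (d : nat) (w : 'I_d -> int) : Prop :=
  forall (m : nat) (u : 'I_d -> int), (forall k, w k = m%:Z * u k) -> m = 1%N.

Definition complete_simplicial_fan (d n : nat) (v : 'I_n -> 'I_d -> int)
    (Sig : {set {set 'I_n}}) : Prop :=
  [/\
      forall S, S \in Sig -> lin_indep v S,
      (* closed under taking faces (faces of a simplicial cone = subsets) *)
      forall S T : {set 'I_n}, S \in Sig -> T \subset S -> T \in Sig,
      (* two cones meet in a common face *)
      forall (S T : {set 'I_n}) x, S \in Sig -> T \in Sig ->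
        in_cone v S x -> in_cone v T x -> in_cone v (S :&: T) x,
      ((forall i, [set i] \in Sig) /\ (forall i, primitive_vec (v i)))
    &
      forall x : 'I_d -> Real, exists2 S, S \in Sig & in_cone v S x].

(* P_Sigma is nef-Fano: the anticanonical divisor -K = sum_i D_i is nef,
   i.e. its support function (linear on each cone, equal to -1 at each
   v_i) is convex: for every cone sigma there is m_sigma in N_R with
   <m_sigma, v_i> = -1 for v_i in sigma and <m_sigma, v_j> >= -1 for all j. *)
Definition nef_Fano (d n : nat) (v : 'I_n -> 'I_d -> int)
    (Sig : {set {set 'I_n}}) : Prop :=
  forall S, S \in Sig -> exists m : 'I_d -> Real,
    (forall i, i \in S -> \sum_(k < d) m k * (v i k)%:~R = -1) /\
    (forall j, -1 <= \sum_(k < d) m k * (v j k)%:~R).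

Notation Poly n := {mpoly Cplx[n]}.

Definition monom (n : nat) (r : 'I_n -> nat) : Poly n :=
  \prod_(i < n) 'X_i ^+ r i.

Definition Dall (n : nat) : Poly n := \prod_(i < n) 'X_i.

Definition lin_elt (d n : nat) (v : 'I_n -> 'I_d -> int) (lam : 'I_d -> int)
    : Poly n :=
  \sum_(i < n) ((\sum_(k < d) lam k * v i k)%:~R * 'X_i).

(* generators of the ideal defining A_k *)
Definition gen_k (d n : nat) (v : 'I_n -> 'I_d -> int) (Sig : {set {set 'I_n}})
    (k : nat) (f : Poly n) : Prop :=
  (exists lam : 'I_d -> int, f = lin_elt v lam) \/
  (exists r : 'I_n -> nat, f = monom r /\
     ~ (exists2 S, S \in Sig & forall i, (k < r i)%N -> in_cone v S (vR v i))).

Definition in_ideal (n : nat) (G : Poly n -> Prop) (f : Poly n) : Prop :=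
  exists s : seq (Poly n * Poly n),
    (forall x, x \in s -> G x.2) /\ f = \sum_(x <- s) x.1 * x.2.

(* An element of the direct limit 𝒜 = lim A_k is represented by a pair
   (k, f): the image in 𝒜 of the class of f in A_k.  Two representatives
   are equal in 𝒜 iff their images agree in some A_m, m >= k, l, under
   the maps A_k -> A_m given by multiplication by prod_i D_i^{m-k}. *)
Definition Arep (n : nat) := (nat * Poly n)%type.

Definition Aeq (d n : nat) (v : 'I_n -> 'I_d -> int) (Sig : {set {set 'I_n}})
    (x y : Arep n) : Prop :=
  exists m : nat, [/\ (x.1 <= m)%N, (y.1 <= m)%N &
    in_ideal (gen_k v Sig m)
      (x.2 * Dall n ^+ (m - x.1) - y.2 * Dall n ^+ (m - y.1))].

Definition Azero (n : nat) : Arep n := (0%N, 0).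

Definition D0 (n : nat) : Poly n := - \sum_(i < n) 'X_i.

(* D_j for j in {0,...,n}, encoded as j : 'I_n.+1 (j = 0 is D_0,
   j = lift ord0 i is D_{i+1} = 'X_i) *)
Definition Dvar (n : nat) (j : 'I_n.+1) : Poly n :=
  oapp (fun i => 'X_i) (D0 n) (unlift ord0 j).

Definition Dact (n : nat) (j : 'I_n.+1) (x : Arep n) : Arep n :=
  (x.1, Dvar j * x.2).

(* Morrison-Plesser class Phi_beta, beta = (b0, b), b0 <= 0: the image of
   D_0^{-b0} prod_i D_i^{k - b_i} in A_k, with k = max_i |b_i| >= max_i b_i. *)
Definition Phi (n : nat) (b0 : int) (b : 'I_n -> int) : Arep n :=
  let k := (\max_(i < n) `|b i|)%N in
  (k, D0 n ^+ `|b0| * \prod_(i < n) 'X_i ^+ `|k%:Z - b i|).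

(* A point p of Mbar = M (+) Z is a pair (pM, pz). *)
(* p lies in K = cone(vbar_0, ..., vbar_n), vbar_0 = (0,1), vbar_i = (v_i,1) *)
Definition in_K (d n : nat) (v : 'I_n -> 'I_d -> int) (pM : 'I_d -> int)
    (pz : int) : Prop :=
  exists (c0 : Real) (c : 'I_n -> Real), 0 <= c0 /\ (forall i, 0 <= c i) /\
    (forall k, (pM k)%:~R = \sum_(i < n) c i * (v i k)%:~R) /\
    pz%:~R = c0 + \sum_(i < n) c i.

(* Psi_p is the formal Laurent series sum_beta Phi_beta a^b; its
   coefficient at the monomial prod_i a_i^{b_i} (b : 'I_n -> int) is
   Phi_beta for the unique beta = (b0, b) with sum_i b_i vbar_i = -p,
   provided it exists and has b0 <= 0, and 0 otherwise. *)
Definition Psi_coef (d n : nat) (v : 'I_n -> 'I_d -> int) (pM : 'I_d -> int)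
    (pz : int) (b : 'I_n -> int) : Arep n :=
  let b0 := - pz - \sum_(i < n) b i in
  if [forall k : 'I_d, \sum_(i < n) b i * v i k == - pM k] && (b0 <= 0)
  then Phi b0 b else Azero n.

(* M-component of vbar_j *)
Definition vbarM (d n : nat) (v : 'I_n -> 'I_d -> int) (j : 'I_n.+1) : 'I_d -> int :=
  fun k => oapp (fun i => v i k) 0 (unlift ord0 j).

(* coefficients of a_j * F at b are those of F at b - e_j (a_0 = 1) *)
Definition shift_exp (n : nat) (j : 'I_n.+1) (b : 'I_n -> int) : 'I_n -> int :=
  fun i => if unlift ord0 j == Some i then b i - 1 else b i.

(* Main.v *)
Require Import Defs.
From HB Require Import structures.
From mathcomp Require Import all_boot all_order all_algebra.
From mathcomp Require Import Rstruct complex mpoly.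
From mathcomp Require Import zify ring lra.
From Stdlib Require Import FunctionalExtensionality.
Import Order.TTheory GRing.Theory Num.Theory.
Local Open Scope ring_scope.

Lemma monomD (n : nat) (r s : 'I_n -> nat) :
  monom r * monom s = monom (fun i => (r i + s i)%N).
Proof. by rewrite /monom -big_split; apply: eq_bigr => i _; rewrite exprD. Qed.

Lemma Dall_exp (n p : nat) : Dall n ^+ p = monom (fun _ : 'I_n => p).
Proof. by rewrite /Dall /monom prodrXl. Qed.

Lemma X_monom (n : nat) (i : 'I_n) (r : 'I_n -> nat) :
  'X_i * monom r = monom (fun l => (r l + (i == l))%N).
Proof.
rewrite /monom (bigD1 i) //= [RHS](bigD1 i) //= eqxx exprD expr1 mulrA.
rewrite [_ ^+ r i * _]mulrC; congr (_ * _); apply: eq_bigr => l /negbTE hl.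
by rewrite eq_sym hl addn0.
Qed.

Lemma ideal0 (n : nat) (G : {mpoly Cplx[n]} -> Prop) : in_ideal G 0.
Proof. by exists [::]; split => //; rewrite big_nil. Qed.

Lemma Aeq_eq (d n : nat) (v : 'I_n -> 'I_d -> int) (Sig : {set {set 'I_n}})
  (x y : Arep n) (m : nat) : (x.1 <= m)%N -> (y.1 <= m)%N ->
  x.2 * Dall n ^+ (m - x.1) = y.2 * Dall n ^+ (m - y.1) -> Aeq v Sig x y.
Proof. by move=> h1 h2 he; exists m; split => //; rewrite he subrr; apply: ideal0. Qed.

Search (_%:~R) (\sum_(_ <- _) _).
Search "intr" "sum".

Lemma key (d n : nat) (v : 'I_n -> 'I_d -> int) (Sig : {set {set 'I_n}})
  (pM : 'I_d -> int) (pz : int) (b : 'I_n -> int) :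
  complete_simplicial_fan v Sig -> nef_Fano v Sig -> in_K v pM pz ->
  (forall k, \sum_(i < n) b i * v i k = - pM k) -> - pz - \sum_(i < n) b i = 1 ->
  ~ exists2 S, S \in Sig & forall i, b i < 0 -> in_cone v S (vR v i).
Proof.
move=> [_ _ Hint [Hsing Hprim] _] Hnef [c0 [c [Hc0 [Hc [HpM Hpz]]]]] Hb Hb0 [S HS Hcone].
have [m [Hm1 Hm2]] := Hnef S HS.
pose w i := \sum_(k < d) m k * (v i k)%:~R : Real.
have HwS : forall i, b i < 0 -> w i = -1.
  move=> i hi; apply: Hm1.
  have c1 : in_cone v [set i] (vR v i).
    exists (fun l => if l == i then 1 else 0); split; first by move=> l; case: eqP.
    by move=> k; rewrite big_set1 eqxx mul1r.
  have := Hint _ _ _ HS (Hsing i) (Hcone i hi) c1.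
  case: (boolP (i \in S)) => // hiS [c' [_ Hc']].
  have E : S :&: [set i] = set0.
    apply/setP => l; rewrite !inE; case: eqP => [->|]; last by rewrite andbF.
    by rewrite (negbTE hiS).
  move: Hc'; rewrite E => Hc'.
  have := Hprim i 0%N (fun _ => 0).
  suff H : forall k, v i k = 0%N%:Z * 0 by move=> /(_ H).
  move=> k; have := Hc' k; rewrite big_set0 /vR => /eqP; rewrite intr_eq0 => /eqP ->.
  by rewrite mulr0.
have E1 : \sum_(k < d) m k * (pM k)%:~R = \sum_(i < n) c i * w i.
  under eq_bigr do rewrite HpM mulr_sumr.
  rewrite exchange_big /=; apply: eq_bigr => i _; rewrite /w mulr_sumr.
  by apply: eq_bigr => k _; rewrite mulrCA.
have h k : (pM k)%:~R = - \sum_(i < n) (b i)%:~R * (v i k)%:~R :> Real.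
  have -> : pM k = - \sum_(i < n) b i * v i k by rewrite Hb opprK.
  rewrite intrN mulrz_sumr; congr (- _); apply: eq_bigr => i _; by rewrite intrM.
have E2 : \sum_(k < d) m k * (pM k)%:~R = - \sum_(i < n) (b i)%:~R * w i.
  under eq_bigr do rewrite h mulrN mulr_sumr.
  rewrite sumrN; congr (- _).
  rewrite exchange_big /=; apply: eq_bigr => i _; rewrite /w mulr_sumr.
  by apply: eq_bigr => k _; rewrite mulrCA.
have I1 : - \sum_(i < n) c i <= \sum_(i < n) c i * w i.
  rewrite -sumrN; apply: ler_sum => i _.
  have h1 := Hc i; have h2 : -1 <= w i := Hm2 i; nra.
have I2 : - \sum_(i < n) (b i)%:~R <= \sum_(i < n) (b i)%:~R * w i :> Real.
  rewrite -sumrN; apply: ler_sum => i _.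
  case: (ltP (b i) 0) => hb; first by rewrite HwS // mulrN1.
  have h1 : 0 <= (b i)%:~R :> Real by rewrite ler0z.
  have h2 : -1 <= w i := Hm2 i; nra.
have Hsb : \sum_(i < n) (b i)%:~R = - (pz%:~R) - 1 :> Real.
  have -> : \sum_(i < n) (b i)%:~R = (\sum_(i < n) b i)%:~R :> Real by rewrite mulrz_sumr.
  have -> : \sum_(i < n) b i = - pz - 1 by rewrite -Hb0; ring.
  by rewrite intrB intrN.
lra.
Qed.

Theorem proposition3p4 (d n : nat) (v : 'I_n -> 'I_d -> int)
    (Sig : {set {set 'I_n}}) :
  complete_simplicial_fan v Sig -> nef_Fano v Sig ->
  forall (pM : 'I_d -> int) (pz : int), in_K v pM pz ->
  forall (j : 'I_n.+1) (b : 'I_n -> int),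
    Aeq v Sig (Dact j (Psi_coef v pM pz b))
      (Psi_coef v (fun k => pM k + vbarM v j k) (pz + 1) (shift_exp j b)).
Proof.
move=> Hfan Hnef pM pz HK j b.
case: (unliftP ord0 j) => [i ->|->].
- set b' := shift_exp (lift ord0 i) b.
  have hb'l l : b' l = if i == l then b l - 1 else b l.
    by rewrite /b' /shift_exp liftK.
  have hv k : vbarM v (lift ord0 i) k = v i k by rewrite /vbarM liftK.
  have Hsum : \sum_(l < n) b' l = \sum_(l < n) b l - 1.
    rewrite (bigD1 i) //= [in RHS](bigD1 i) //= hb'l eqxx.
    rewrite (eq_bigr (fun l => b l)); first by ring.
    by move=> l /negbTE hl; rewrite hb'l eq_sym hl.
  have Hsumv k : \sum_(l < n) b' l * v l k = \sum_(l < n) b l * v l k - v i k.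
    rewrite (bigD1 i) //= [in RHS](bigD1 i) //= hb'l eqxx.
    rewrite (eq_bigr (fun l => b l * v l k)); first by ring.
    by move=> l /negbTE hl; rewrite hb'l eq_sym hl.
  rewrite /Psi_coef /Dact /Dvar liftK /=.
  have -> : [forall k, \sum_(l < n) b' l * v l k == - (pM k + vbarM v (lift ord0 i) k)]
          = [forall k, \sum_(l < n) b l * v l k == - pM k].
    apply: eq_forallb => k; rewrite Hsumv hv; apply/eqP/eqP => H; lia.
  have -> : - (pz + 1) - \sum_(l < n) b' l = - pz - \sum_(l < n) b l.
    by rewrite Hsum; ring.
  case: ifP => _; last first.
    by apply: (@Aeq_eq _ _ _ _ _ _ 0%N) => //=; rewrite !mulr0 !mul0r.
  rewrite /Phi /=.
  set K := (\max_(l < n) `|b l|)%N.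
  set K' := (\max_(l < n) `|b' l|)%N.
  apply: (@Aeq_eq _ _ _ _ _ _ (maxn K K')) => /=; first exact: leq_maxl.
    exact: leq_maxr.
  rewrite mulrCA -!mulrA; congr (_ * _).
  have -> : \prod_(l < n) 'X_l ^+ `|K%:Z - b l|%N = monom (fun l => `|K%:Z - b l|%N) by [].
  have -> : \prod_(l < n) 'X_l ^+ `|K'%:Z - b' l|%N = monom (fun l => `|K'%:Z - b' l|%N) by [].
  rewrite mulrA X_monom !Dall_exp !monomD; congr monom.
  apply: functional_extensionality => l.
  have h1 : (`|b l| <= K)%N by rewrite /K; exact: (leq_bigmax l).
  have h2 : (`|b' l| <= K')%N by rewrite /K'; exact: (leq_bigmax l).
  move: h2; rewrite hb'l; case: eqP => _ h2; lia.
- have -> : (fun k => pM k + vbarM v ord0 k) = pM.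
    by apply: functional_extensionality => k; rewrite /vbarM unlift_none addr0.
  have -> : shift_exp ord0 b = b.
    by apply: functional_extensionality => l; rewrite /shift_exp unlift_none.
  rewrite /Psi_coef /Dact /Dvar unlift_none /=.
  set s := \sum_(l < n) b l.
  case hC: [forall k, _] => /=; last first.
    by apply: (@Aeq_eq _ _ _ _ _ _ 0%N) => //=; rewrite !mulr0 !mul0r.
  case: ifP => h1; case: ifP => h2.
  - rewrite /Phi /=.
    set K := (\max_(l < n) `|b l|)%N.
    apply: (@Aeq_eq _ _ _ _ _ _ K) => //=.
    rewrite subnn expr0 !mulr1 mulrA -exprS.
    have -> : `|(- (pz + 1) - s)|%N = (`|- pz - s|%N).+1 by lia.
    by [].
  - exfalso; move/negbT: h2; lia.
  - rewrite /Phi /=.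
    set K := (\max_(l < n) `|b l|)%N.
    have E0 : - (pz + 1) - s = 0 by move/negbT: h1; lia.
    exists K; split => //=.
    rewrite E0 subnn expr0 !mulr1 mulr0 mul0r sub0r mul1r.
    exists [:: (-1, monom (fun l => `|K%:Z - b l|%N))]; split; last first.
      by rewrite big_seq1 /= mulN1r.
    move=> x; rewrite inE => /eqP -> /=; right.
    exists (fun l => `|K%:Z - b l|%N); split => // -[S HS H].
    apply: (@key _ _ v Sig pM pz b Hfan Hnef HK).
    + by move=> k; move/forallP: hC => /(_ k) /eqP.
    + rewrite -/s; lia.
    exists S => // l hl; apply: H.
    have h3 : (`|b l| <= K)%N by rewrite /K; exact: (leq_bigmax l).
    lia.
  - by apply: (@Aeq_eq _ _ _ _ _ _ 0%N) => //=; rewrite !mulr0 !mul0r.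
Qed.
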